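(* Let $Q\in\mathbb{R}^{n\times n}$ be symmetric positive definite, $\|x\|=\sqrt{x^TQx}$, $\|u\|_*=\sqrt{u^TQ^{-1}u}$. Let $f\colon\mathbb{R}^n\to\mathbb{R}$ be convex and differentiable with $\|\nabla f(x)-\nabla f(y)\|_*\le L\|x-y\|$ for all $x,y$, with a minimizer $x_\star$, $f_\star=f(x_\star)$. Let $w$ be differentiable and $1$-strongly convex with respect to $\|\cdot\|$, $V_x(y)=w(y)-\langle\nabla w(x),y-x\rangle-w(x)$. Let $\{\alpha_k\}_{k\ge1}$ be positive with $\alpha_1=\frac2L$, and $\tau_k=\frac2{\alpha_{k+1}L}$ with $0<\tau_k\le1$ for $k=0,1,\dots$. Given $x_0$, let $z_0=x_0$, $x_{-1}=x_0$, and for $k\ge0$ \[ y_{k+1}=x_k-L^{-1}Q^{-1}\nabla f(x_k),\quad z_{k+1}=\operatorname*{argmin}_{y}\{V_{z_k}(y)+\langle\alpha_{k+1}\nabla f(x_k),y-x_k\rangle\},\quad x_{k+1}=(1-\tau_{k+1})y_{k+1}+\tau_{k+1}z_{k+1}. \] Let $h(x)=f(x)-f_\star-\frac1{2L}\|\nabla f(x)\|_*^2$. Then for $k=0,1,\dots$, \[ \frac{\alpha_{k+1}^2L}{2}h(x_k)+V_{z_{k+1}}(x_\star)\le\frac{\alpha_{k+1}^2L-2\alpha_{k+1}}{2}h(x_{k-1})+V_{z_k}(x_\star). \]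
   Context: $\langle\cdot,\cdot\rangle$ is the Euclidean inner product. ''$1$-strongly convex with respect to $\|\cdot\|$'' means $w(y)\ge w(x)+\langle\nabla w(x),y-x\rangle+\frac12\|y-x\|^2$ for all $x,y$. *)

(* Defs.v *)
From HB Require Import structures.
From mathcomp Require Import all_boot all_order all_algebra.
From mathcomp Require Import all_classical all_reals all_analysis.
Set Implicit Arguments. Unset Strict Implicit. Unset Printing Implicit Defensive.
Import Order.TTheory GRing.Theory Num.Theory.
Import numFieldNormedType.Exports.
Local Open Scope ring_scope.

Definition ip {R : realType} {n : nat} (u v : 'cV[R]_n) : R := (u^T *m v) 0 0.

Definition qf {R : realType} {n : nat} (A : 'M[R]_n) (u : 'cV[R]_n) : R :=
  (u^T *m A *m u) 0 0.

Definition spd {R : realType} {n : nat} (Q : 'M[R]_n) : Prop :=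
  Q^T = Q /\ forall x : 'cV[R]_n, x != 0 -> 0 < qf Q x.

Definition Qnorm {R : realType} {n : nat} (Q : 'M[R]_n) (x : 'cV[R]_n) : R :=
  Num.sqrt (qf Q x).
Definition Qdnorm {R : realType} {n : nat} (Q : 'M[R]_n) (u : 'cV[R]_n) : R :=
  Num.sqrt (qf (invmx Q) u).

Definition grad {R : realType} {n : nat} (f : 'cV[R]_n -> R) (x : 'cV[R]_n)
  : 'cV[R]_n := \col_i ('D_(delta_mx i 0) f x).

Definition convex_fun {R : realType} {n : nat} (f : 'cV[R]_n -> R) : Prop :=
  forall (x y : 'cV[R]_n) (t : R), 0 <= t <= 1 ->
    f ((1 - t) *: x + t *: y) <= (1 - t) * f x + t * f y.

Definition strongly_convex1 {R : realType} {n : nat} (Q : 'M[R]_n)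
  (w : 'cV[R]_n -> R) : Prop :=
  forall x y : 'cV[R]_n,
    w x + ip (grad w x) (y - x) + 2^-1 * (Qnorm Q (y - x)) ^+ 2 <= w y.

Definition Vbreg {R : realType} {n : nat} (w : 'cV[R]_n -> R) (x y : 'cV[R]_n)
  : R := w y - ip (grad w x) (y - x) - w x.

(* Main.v *)
Require Import Defs.
From HB Require Import structures.
From mathcomp Require Import all_boot all_order all_algebra.
From mathcomp Require Import all_classical all_reals all_analysis.
From mathcomp Require Import ring lra.
Set Implicit Arguments. Unset Strict Implicit.
Import Order.TTheory GRing.Theory Num.Theory.
Import numFieldNormedType.Exports.
Local Open Scope ring_scope.

Section S.
Local Open Scope classical_set_scope.
Variables (R : realType) (n : nat).
Implicit Types (u v : 'cV[R]_n).

Lemma right_sub (q : R -> R) (l : R) : q x @[x --> (0:R)^'] --> l -> q x @[x --> (0:R)^'+] --> l.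
Proof.
move=> H.
have sub : (0:R)^'+ `=>` (0:R)^'.
  by apply: within_subset => x /= x0; exact: lt0r_neq0.
exact: cvg_trans (cvg_app q sub) H.
Qed.

Lemma Dle (F : 'cV[R]_n -> R) p d C : derivable F p d ->
  (forall t : R, 0 < t -> t <= 1 -> F (t *: d + p) - F p <= t * C) -> 'D_d F p <= C.
Proof.
move=> dF H.
have cv := @right_sub _ _ dF.
apply: (cvgr_to_le cv).
near=> t.
have t0 : 0 < t by near: t; exact: nbhs_right_gt.
have t1 : t <= 1 by near: t; apply: nbhs_right_le; exact: ltr01.
rewrite /= -[_ *: _]/(t^-1 * _) ler_pdivrMl //.
exact: H.
Unshelve. all: by end_near.
Qed.

Lemma Dge (F : 'cV[R]_n -> R) p d C : derivable F p d ->
  (forall t : R, 0 < t -> t <= 1 -> t * C <= F (t *: d + p) - F p) -> C <= 'D_d F p.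
Proof.
move=> dF H.
have cv := @right_sub _ _ dF.
apply: (cvgr_to_ge cv).
near=> t.
have t0 : 0 < t by near: t; exact: nbhs_right_gt.
have t1 : t <= 1 by near: t; apply: nbhs_right_le; exact: ltr01.
rewrite /= -[_ *: _]/(t^-1 * _) ler_pdivlMl //.
exact: H.
Unshelve. all: by end_near.
Qed.

Lemma ipE u v : ip u v = \sum_i u i 0 * v i 0.
Proof. by rewrite /ip mxE; apply: eq_bigr => i _; rewrite mxE. Qed.

Lemma ipC u v : ip u v = ip v u.
Proof. by rewrite !ipE; apply: eq_bigr => i _; rewrite mulrC. Qed.

Lemma ipDr u v w : ip u (v + w) = ip u v + ip u w.
Proof. by rewrite /ip mulmxDr mxE. Qed.
Lemma ipZr u v a : ip u (a *: v) = a * ip u v.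
Proof. by rewrite /ip -scalemxAr mxE. Qed.
Lemma ipNr u v : ip u (- v) = - ip u v.
Proof. by rewrite /ip mulmxN mxE. Qed.
Lemma ipBr u v w : ip u (v - w) = ip u v - ip u w.
Proof. by rewrite ipDr ipNr. Qed.
Lemma ipDl u v w : ip (v + w) u = ip v u + ip w u.
Proof. by rewrite ipC ipDr ![ip u _]ipC. Qed.
Lemma ipZl u v a : ip (a *: v) u = a * ip v u.
Proof. by rewrite ipC ipZr ipC. Qed.
Lemma ipNl u v : ip (- v) u = - ip v u.
Proof. by rewrite ipC ipNr ipC. Qed.
Lemma ipBl u v w : ip (v - w) u = ip v u - ip w u.
Proof. by rewrite ipDl ipNl. Qed.
Lemma ip0r u : ip u 0 = 0.
Proof. by rewrite /ip mulmx0 mxE. Qed.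
Lemma ip0l u : ip 0 u = 0.
Proof. by rewrite ipC ip0r. Qed.
Lemma ipMr (A : 'M[R]_n) u v : ip u (A *m v) = ip (A^T *m u) v.
Proof. by rewrite /ip trmx_mul trmxK mulmxA. Qed.
Lemma qfE (A : 'M[R]_n) u : qf A u = ip u (A *m u).
Proof. by rewrite /qf /ip mulmxA. Qed.

Lemma grad_ip (f : 'cV[R]_n -> R) p d : differentiable f p ->
  'D_d f p = ip (grad f p) d.
Proof.
move=> df.
rewrite deriveE // ipE {1}(matrix_sum_delta d) linear_sum /=.
apply: eq_bigr => i _; rewrite big_ord1 linearZ /= mxE -deriveE //.
by rewrite mulrC; congr (_ * _); rewrite (ord1 (0 : 'I_1)).
Qed.

Lemma conv_fo (f : 'cV[R]_n -> R) p q : convex_fun f -> differentiable f p ->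
  f p + ip (grad f p) (q - p) <= f q.
Proof.
move=> cf df.
rewrite -grad_ip // addrC -lerBrDr.
apply: Dle; first exact: diff_derivable.
move=> t t0 t1.
have := cf p q t; rewrite ltW //= t1 => /(_ isT).
have -> : (1 - t) *: p + t *: q = t *: (q - p) + p.
  by apply/matrixP => i j; rewrite !mxE; ring.
move=> H; apply: (le_trans (lerB H (lexx _))).
by rewrite le_eqVlt; apply/orP; left; apply/eqP; ring.
Qed.

Variable Q : 'M[R]_n.
Hypothesis sQ : spd Q.

Lemma qf_ge0 u : 0 <= qf Q u.
Proof.
have [->|u0] := eqVneq u 0; first by rewrite /qf mulmx0 mxE.
by apply: ltW; apply: sQ.2.
Qed.

Lemma unitQ : Q \in unitmx.
Proof.
rewrite -row_free_unit; apply: inj_row_free => v vQ.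
have Qx : Q *m v^T = 0 by rewrite -{1}sQ.1 -trmx_mul vQ trmx0.
have : qf Q v^T = 0 by rewrite /qf -mulmxA Qx mulmx0 mxE.
have [x0|xn0] := eqVneq v^T 0.
  by move=> _; rewrite -[v]trmxK x0 trmx0.
by move=> h; have := sQ.2 _ xn0; rewrite h ltxx.
Qed.

Lemma Qi_sym : (invmx Q)^T = invmx Q.
Proof. by rewrite trmx_inv sQ.1. Qed.

Lemma QQi u : Q *m (invmx Q *m u) = u.
Proof. by rewrite mulmxA mulmxV ?unitQ // mul1mx. Qed.

Lemma qfi_ge0 u : 0 <= qf (invmx Q) u.
Proof.
rewrite qfE -{1}(QQi u) ipC -qfE; exact: qf_ge0.
Qed.

Lemma qfiQ u : qf Q (invmx Q *m u) = qf (invmx Q) u.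
Proof. by rewrite !qfE QQi ipC. Qed.


Lemma qfZ (A : 'M[R]_n) a u : qf A (a *: u) = a ^+ 2 * qf A u.
Proof. by rewrite !qfE -scalemxAr ipZl ipZr mulrA expr2. Qed.

Lemma qfB_sym (A : 'M[R]_n) a b : A^T = A ->
  qf A (a - b) = qf A a - 2 * ip a (A *m b) + qf A b.
Proof.
move=> sA; rewrite !qfE mulmxBr ipBl !ipBr.
have -> : ip b (A *m a) = ip a (A *m b) by rewrite ipMr sA ipC.
by ring.
Qed.

Lemma amgm s u d : 2 * s * ip u d <= s ^+ 2 * qf (invmx Q) u + qf Q d.
Proof.
have := qf_ge0 (s *: (invmx Q *m u) - d).
rewrite qfB_sym ?sQ.1 // qfZ qfiQ ipZl ipMr sQ.1 QQi.
by move=> h; rewrite -subr_ge0; apply: (le_trans h); rewrite le_eqVlt; apply/orP; left; apply/eqP; ring.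
Qed.

Variables (f : 'cV[R]_n -> R) (L : R).
Hypothesis df : forall p, differentiable f p.
Hypothesis L0 : 0 < L.
Hypothesis Lip : forall p q, Qdnorm Q (grad f p - grad f q) <= L * Qnorm Q (p - q).

Lemma Lip2 p q : qf (invmx Q) (grad f p - grad f q) <= L ^+ 2 * qf Q (p - q).
Proof.
have h := Lip p q; move: h; rewrite /Qdnorm /Qnorm => h.
rewrite -(sqr_sqrtr (qfi_ge0 _)) -(sqr_sqrtr (qf_ge0 (p - q))) -exprMn.
by rewrite ler_pXn2r // ?nnegrE ?sqrtr_ge0 // mulr_ge0 // ?sqrtr_ge0 // ltW.
Qed.

Lemma inner_bd b d t : 0 < t ->
  ip (grad f (b + t *: d) - grad f b) d <= L * t * qf Q d.
Proof.
move=> t0.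
set X := ip _ d.
have h1 := amgm (L * t)^-1 (grad f (b + t *: d) - grad f b) d.
have h2 := Lip2 (b + t *: d) b.
have e : b + t *: d - b = t *: d by rewrite addrC addKr.
move: h2; rewrite e qfZ => h2.
have B0 := qf_ge0 d.
have Lt0 : 0 < L * t by apply: mulr_gt0.
set A := qf (invmx Q) _ in h1 h2.
set B := qf Q d in h1 h2 B0 *.
set s := (L * t)^-1 in h1.
have sLt : s * (L * t) = 1 by rewrite mulVf // gt_eqF.
have s0 : 0 < s by rewrite invr_gt0.
have k1 : 0 <= (L*t)*(s^+2*A + B - 2*s*X) by apply: mulr_ge0; [exact: ltW|rewrite subr_ge0].
have k2 : 0 <= s*(L^+2*(t^+2*B) - A) by apply: mulr_ge0; [exact: ltW|rewrite subr_ge0].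
have e1 : (L*t)*(s^+2*A + B - 2*s*X) = (s*(L*t))*(s*A) + L*t*B - 2*(s*(L*t))*X by ring.
have e2 : s*(L^+2*(t^+2*B) - A) = (s*(L*t))*(L*t*B) - s*A by ring.
rewrite e1 sLt in k1; rewrite e2 sLt in k2.
lra.
Qed.

Lemma gderiv b d t : is_derive t (1:R) (fun s : R => f (b + s *: d)) (ip (grad f (b + t *: d)) d).
Proof.
set g := fun s : R => f (b + s *: d).
have E : (fun h : R => h^-1 *: ((g \o shift t) (h *: 1) - g t)) =
         (fun h : R => h^-1 *: ((f \o shift (b + t *: d)) (h *: d) - f (b + t *: d))).
  apply: funext => h /=; congr (_ *: (_ - _)); rewrite /g; congr f.
  by apply/matrixP => i j; rewrite !mxE /GRing.scale /=; ring.
apply: DeriveDef; first by rewrite /derivable E; exact: diff_derivable.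
by rewrite /derive E -/(derive _ _ _) grad_ip.
Qed.

Lemma descent b d : f (b + d) <= f b + ip (grad f b) d + L / 2 * qf Q d.
Proof.
set K := ip (grad f b) d; set B := qf Q d.
pose P := K \*: (@id R) + (L/2*B) \*: ((@id R) * (@id R)).
pose G := (fun s : R => f (b + s *: d)) - P.
have dG t : is_derive t (1:R) G (ip (grad f (b + t *: d)) d - (K *: 1 + (L/2*B) *: (t *: 1 + t *: 1))).
  apply: is_deriveB; first exact: gderiv.

have cG : {within `[0, 1], continuous G}.
  by apply: derivable_within_continuous => x _; exact: (dG x).(ex_derive).
have [c c01 hc] := MVT ltr01 (fun x _ => dG x) cG.
have Gv s : G s = f (b + s *: d) - (K * s + L / 2 * B * (s * s)) by [].
have e : (K%:A + (L / 2 * B) *: (c%:A + c%:A)) = K + L * B * c :> R.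
  change (K * 1 + (L / 2 * B) * (c * 1 + c * 1) = K + L * B * c).
  by rewrite !mulr1; field.
rewrite !Gv e in hc.
have c0 : 0 < c by move: c01; rewrite in_itv /= => /andP [].
have := inner_bd b d c0; rewrite ipBl -/K -/B => hb.
move: hc; rewrite scale1r scale0r addr0 !mulr1 !mulr0 subr0 => hc.
lra.
Qed.

Lemma cocoer (cf : convex_fun f) a b :
  f a + ip (grad f a) (b - a) + (2 * L)^-1 * qf (invmx Q) (grad f b - grad f a) <= f b.
Proof.
set D := grad f b - grad f a.
set dd := (- L^-1) *: (invmx Q *m D).
have h1 := conv_fo (b + dd) cf (df a).
have h2 := descent b dd.
have e1 : b + dd - a = (b - a) + dd by rewrite addrAC.
rewrite e1 ipDr in h1.
rewrite /dd qfZ qfiQ !ipZr in h1 h2.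
have eS : qf (invmx Q) D = ip (grad f b) (invmx Q *m D) - ip (grad f a) (invmx Q *m D).
  by rewrite qfE /D ipBl.
rewrite eS in h2 *.
set A := ip (grad f a) (invmx Q *m D) in h1 h2 *.
set Bb := ip (grad f b) (invmx Q *m D) in h1 h2 *.
have eL : L / 2 * ((- L^-1) ^+ 2 * (Bb - A)) = (2 * L)^-1 * (Bb - A).
  field; exact: lt0r_neq0.
rewrite eL in h2.
have e3 : - L^-1 * Bb - (- L^-1 * A) = - (2 * ((2*L)^-1 * (Bb - A))).
  field; exact: lt0r_neq0.
lra.
Qed.
End S.

Lemma final_alg (R : realType) (a L c V0 V1 Vz I1 I3 Y G G' fk fs fp q : R) :
 0 < L -> 0 < a -> c = (a ^+ 2 * L - 2 * a) / 2 ->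
 V1 <= V0 - Vz + a * I1 + c * Y + a * I3 ->
 q / 2 <= Vz ->
 2 * a * I3 <= a ^+ 2 * G + q ->
 a * (fk + I1 + (2 * L)^-1 * G) <= a * fs ->
 c * (fk + Y + (2 * L)^-1 * G) <= c * (fp - (2 * L)^-1 * G') ->
 a ^+ 2 * L / 2 * (fk - fs - (2 * L)^-1 * G) + V1
   <= (a ^+ 2 * L - 2 * a) / 2 * (fp - fs - (2 * L)^-1 * G') + V0.
Proof.
move=> L0 a0 hc h1 h2 h3 h4 h5.
rewrite -hc.
have eA : a ^+ 2 * L / 2 = c + a by rewrite hc; field.
have eG : 2 * c * ((2 * L)^-1 * G) + 2 * a * ((2 * L)^-1 * G) = a ^+ 2 * G / 2.
  by rewrite hc; field; exact: lt0r_neq0.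
rewrite eA.
lra.
Qed.

Unset Implicit Arguments.

Theorem lemma2 (R : realType) (n : nat) (Q : 'M[R]_n)
  (f w : 'cV[R]_n -> R) (L : R) (xstar : 'cV[R]_n)
  (alpha : nat -> R) (x y z : nat -> 'cV[R]_n) :
  spd Q ->
  convex_fun f ->
  (forall p, differentiable f p) ->
  0 < L ->
  (forall p q, Qdnorm Q (grad f p - grad f q) <= L * Qnorm Q (p - q)) ->
  (forall p, f xstar <= f p) ->
  (forall p, differentiable w p) ->
  strongly_convex1 Q w ->
  (forall k, (1 <= k)%N -> 0 < alpha k) ->
  alpha 1%N = 2 / L ->
  (forall k, 0 < 2 / (alpha k.+1 * L) <= 1) ->
  z 0%N = x 0%N ->
  (forall k, y k.+1 = x k - L^-1 *: (invmx Q *m grad f (x k))) ->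
  (forall k, forall p,
     Vbreg w (z k) (z k.+1) + ip (alpha k.+1 *: grad f (x k)) (z k.+1 - x k)
     <= Vbreg w (z k) p + ip (alpha k.+1 *: grad f (x k)) (p - x k)) ->
  (forall k, let tau := 2 / (alpha k.+2 * L) in
     x k.+1 = (1 - tau) *: y k.+1 + tau *: z k.+1) ->
  let h := fun p => f p - f xstar - (2 * L)^-1 * (Qdnorm Q (grad f p)) ^+ 2 in
  let xprev := fun k : nat => if k is k'.+1 then x k' else x 0%N in
  forall k : nat,
    alpha k.+1 ^+ 2 * L / 2 * h (x k) + Vbreg w (z k.+1) xstar
    <= (alpha k.+1 ^+ 2 * L - 2 * alpha k.+1) / 2 * h (xprev k)
       + Vbreg w (z k) xstar.
Proof.
move=> sQ cf dfp L0 Lip fmin dw sc apos a1 tau z0 yk zmin xk h xprev k.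
set a := alpha k.+1.
have a0 : 0 < a by apply: apos.
set g := grad f (x k).
set zp := z k.+1.
have FOw : ip (grad w (z k)) (xstar - zp) - a * ip g (xstar - zp) <= ip (grad w zp) (xstar - zp).
  rewrite -(grad_ip _ (dw zp)); apply: Dge; first exact: diff_derivable.
  move=> t t0 t1; have := zmin k (t *: (xstar - zp) + zp); rewrite /Vbreg -/a -/g -/zp.
  have e1 : t *: (xstar - zp) + zp - z k = t *: (xstar - zp) + (zp - z k) by rewrite addrA.
  have e2 : t *: (xstar - zp) + zp - x k = t *: (xstar - zp) + (zp - x k) by rewrite addrA.
  rewrite e1 e2 !(ipDr _ (t *: _)) !ipZr !ipZl.
  lra.
have M1 : Vbreg w zp xstar <= Vbreg w (z k) xstar - Vbreg w (z k) zp + a * ip g (xstar - zp).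
  rewrite /Vbreg.
  have e : xstar - z k = (xstar - zp) + (zp - z k) by rewrite addrA subrK.
  rewrite e (ipDr _ (xstar - zp)); lra.
have M2 : qf Q (z k - zp) / 2 <= Vbreg w (z k) zp.
  have := sc (z k) zp; rewrite /Vbreg /Qnorm sqr_sqrtr ?qf_ge0 //.
  rewrite -opprB -scaleN1r qfZ sqrrN expr1n mul1r; lra.
have M3 := amgm sQ a g (z k - zp).
have gz : forall d, ip (grad f xstar) d = 0.
  have gp : forall d, 0 <= ip (grad f xstar) d.
    move=> d; rewrite -(grad_ip _ (dfp xstar)); apply: Dge; first exact: diff_derivable.
    by move=> t _ _; rewrite mulr0 subr_ge0.
  move=> d; apply/eqP; rewrite eq_le gp andbT.
  by have := gp (- d); rewrite ipNr oppr_ge0.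
have M4 := cocoer sQ dfp L0 Lip cf (x k) xstar.
rewrite qfB_sym ?Qi_sym // (qfE (invmx Q) (grad f xstar)) !gz -/g in M4.
have M4' : a * (f (x k) + ip g (xstar - x k) + (2 * L)^-1 * qf (invmx Q) g) <= a * f xstar.
  by apply: ler_wpM2l; [exact: ltW | move: M4; rewrite mulr0 subrr add0r].
have dec : ip g (xstar - zp) = ip g (xstar - x k) + ip g (x k - z k) + ip g (z k - zp).
  by rewrite -!ipDr; congr ip; apply/matrixP => i j; rewrite !mxE; ring.
rewrite dec in M1.
rewrite /h /Qdnorm !sqr_sqrtr ?qfi_ge0 //.
set c := (a ^+ 2 * L - 2 * a) / 2.
have L0' : L != 0 by exact: lt0r_neq0.
have a0' : a != 0 by exact: lt0r_neq0.
have [Y [eY h5]] : exists Y, a * ip g (x k - z k) = c * Y /\ c * (f (x k) + Y + (2 * L)^-1 * qf (invmx Q) g) <=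
    c * (f (xprev k) - (2 * L)^-1 * qf (invmx Q) (grad f (xprev k))).
  have [Ek|[k' Ek]] : k = 0%N \/ exists k', k = k'.+1 by case: (k) => [|m]; [left | right; exists m].
    have c0 : c = 0.
      rewrite /c /a Ek a1; field; exact: L0'.
    exists 0; rewrite c0 !mul0r; split => //.
    by rewrite Ek z0 subrr ip0r mulr0.
  set tau' := 2 / (a * L).
  have ek : x k = (1 - tau') *: y k + tau' *: z k.
    by have := xk k'; rewrite /= -Ek.
  have vx : x k - z k = (1 - tau') *: (y k - z k).
    by rewrite ek; apply/matrixP => i j; rewrite !mxE; ring.
  have vy : y k - x k = tau' *: (y k - z k).
    by rewrite ek; apply/matrixP => i j; rewrite !mxE; ring.
  exists (ip g (y k - x k)); split.
    rewrite vx vy !ipZr /c /tau'; field.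
    by rewrite a0' L0'.
  have ct : tau' <= 1 by have := tau k; rewrite -/a => /andP [].
  have c0 : 0 <= c.
    have h2 : 2 <= a * L by move: ct; rewrite /tau' ler_pdivrMr ?mul1r // mulr_gt0.
    rewrite /c; apply: divr_ge0 => //.
    have -> : a ^+ 2 * L - 2 * a = a * (a * L - 2) by ring.
    by apply: mulr_ge0; [exact: ltW | rewrite subr_ge0].
  apply: ler_wpM2l => //.
  have xp : xprev k = x k' by rewrite /xprev Ek.
  rewrite xp.
  have M5 := cocoer sQ dfp L0 Lip cf (x k) (x k').
  rewrite qfB_sym ?Qi_sym // -/g in M5.
  have vy2 : y k - x k = (x k' - x k) - L^-1 *: (invmx Q *m grad f (x k')).
    by rewrite Ek yk; apply/matrixP => i j; rewrite !mxE; ring.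
  rewrite vy2 ipBr ipZr.
  have e : ip g (invmx Q *m grad f (x k')) = ip (grad f (x k')) (invmx Q *m g).
    by rewrite ipMr (Qi_sym sQ) ipC.
  rewrite e.
  set P := ip (grad f (x k')) _ in M5 *.
  have e2 : (2 * L)^-1 * (2 * P) = L^-1 * P by field.
  move: M5; set G1 := qf _ (grad f (x k')); set G0 := qf _ g => M5.
  have e3 : (2 * L)^-1 * (G1 - 2 * P + G0) = (2 * L)^-1 * G1 - (2 * L)^-1 * (2 * P) + (2 * L)^-1 * G0 by ring.
  rewrite e3 e2 in M5.
  lra.
have M1' : Vbreg w zp xstar <= Vbreg w (z k) xstar - Vbreg w (z k) zp + a * ip g (xstar - x k) + c * Y + a * ip g (z k - zp).
  move: M1; rewrite !mulrDr eY; lra.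
apply: (final_alg L0 a0 (erefl c) M1' M2 M3 M4' h5).
Qed.
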